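(* Let $x \in \mathbb{R}^n$ be deterministic, $y\in\mathbb{R}^n$ deterministic, and $f:\mathbb{R}^n\to\mathbb{R}^n$. Let $\tilde a,\tilde b,\tilde c$ be random vectors in $\mathbb{R}^n$ such that all $3n$ entries are mutually independent, $\mathbb{E}[\tilde a_i] = \mathbb{E}[\tilde b_i] = \mathbb{E}[\tilde c_i] = x_i$ for all $i$, and for each $i$ the variables $\tilde a_i,\tilde b_i,\tilde c_i$ have common $k$-th central moments $\mu_i^{[k]}$ for $k\le 4$. Let $\gamma := \max_{1\le i\le n}|x_i - f(y)_i|$ and suppose there is a constant $\alpha$ with $\max_{1\le i\le n}\max\{\mu_i^{[4]}, \mu_i^{[3]}\gamma, \gamma^4\}\le\alpha$. Let $\widetilde{\mathrm{uSE}}_i := (\tilde a_i - f(y)_i)^2 - \frac{(\tilde b_i - \tilde c_i)^2}{2}$. Then $\mathrm{Var}[\widetilde{\mathrm{uSE}}_i] \le 14\alpha$ for every $1\le i\le n$. *)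

(* Defs.v *)
From HB Require Import structures.
From mathcomp Require Import all_boot all_order all_algebra.
From mathcomp Require Import all_classical all_reals all_analysis.
Set Implicit Arguments. Unset Strict Implicit. Unset Printing Implicit Defensive.
Import Order.TTheory GRing.Theory Num.Theory.
Local Open Scope classical_set_scope.
Local Open Scope ring_scope.

Definition mutually_independent d (T : measurableType d) (R : realType)
  (P : probability T R) (I : finType) (X : I -> T -> R) : Prop :=
  forall (J : {set I}) (B : I -> set R),
    (forall j, measurable (B j)) ->
    P (\bigcap_(j in [set j | j \in J]) (X j @^-1` B j)) =
    (\prod_(j in J) P (X j @^-1` B j))%E.

Definition entries3 d (T : measurableType d) (R : realType) n
  (a b c : 'I_n -> T -> R) (p : 'I_3 * 'I_n) : T -> R :=
  match val p.1 with
  | 0 => a p.2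
  | 1 => b p.2
  | _ => c p.2
  end.

Definition central_moment d (T : measurableType d) (R : realType)
  (P : probability T R) (X : T -> R) (m : R) (k : nat) : \bar R :=
  'E_P[fun w => (X w - m) ^+ k].

Definition uSE d (T : measurableType d) (R : realType)
  (A B C : T -> R) (fy : R) : T -> R :=
  fun w => (A w - fy) ^+ 2 - (B w - C w) ^+ 2 / 2.

(* Main.v *)
Require Import Defs.
From HB Require Import structures.
From mathcomp Require Import all_boot all_order all_algebra.
From mathcomp Require Import all_classical all_reals all_analysis.
From mathcomp Require Import measurable_realfun.
From mathcomp Require Import ring lra.
Import Order.TTheory GRing.Theory Num.Theory.
Local Open Scope classical_set_scope.
Local Open Scope ring_scope.
Section indep.
Context d (T : measurableType d) (R : realType) (P : probability T R).
Local Open Scope ereal_scope.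

Lemma indep_ge0 (X Y : {RV P >-> R}) (g h : R -> R) :
  measurable_fun setT g -> measurable_fun setT h ->
  (forall x, 0 <= g x)%R -> (forall x, 0 <= h x)%R ->
  (forall A B, measurable A -> measurable B ->
     P (X @^-1` A `&` Y @^-1` B) = P (X @^-1` A) * P (Y @^-1` B)) ->
  \int[P]_w ((g (X w) * h (Y w))%:E) =
  \int[P]_w (g (X w))%:E * \int[P]_w (h (Y w))%:E.
Proof.
move=> mg mh g0 h0 ind.
pose Phi := fun w => (X w, Y w).
have mPhi : measurable_fun setT Phi by apply: measurable_fun_pair.
pose F := fun z : R * R => (g z.1 * h z.2)%R%:E.
have mF : measurable_fun (setT : set (R * R)%type) F.
  apply/measurable_EFinP; apply: measurable_funM.
    exact: (measurableT_comp mg measurable_fst).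
  exact: (measurableT_comp mh measurable_snd).
have F0 z : 0 <= F z by rewrite lee_fin mulr_ge0.
pose mX := distribution P X.
pose mY := distribution P Y.
have E1 : \int[P]_w ((g (X w) * h (Y w))%:E) = \int[pushforward P Phi]_z F z.
  by rewrite ge0_integral_pushforward.
rewrite E1.
have E2 : \int[pushforward P Phi]_z F z = \int[mX \x mY]_z F z.
  apply: eq_measure_integral => A mA _.
  apply/esym; apply: product_measure_unique => //.
rewrite E2 fubini_tonelli1 //.
transitivity (\int[mX]_x ((g x)%:E * \int[mY]_y (h y)%:E)).
  apply: eq_integral => x _; rewrite /fubini_F /F /=.
  under eq_integral do rewrite EFinM.
  rewrite ge0_integralZl_EFin //.
    by move=> y _; rewrite lee_fin.
  exact/measurable_EFinP.
rewrite ge0_integralZr //; last 3 first.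
- exact/measurable_EFinP.
- by move=> y _; rewrite lee_fin.
- by apply: integral_ge0 => y _; rewrite lee_fin.
rewrite /mX /mY !ge0_integral_distribution //; exact/measurable_EFinP.
Qed.

Definition hasE (f : T -> R) (r : R) := f \in Lfun P 1 /\ 'E_P[f] = r%:E.

Lemma hasE_cst r : hasE (cst r) r.
Proof. by split; [exact: Lfun_cst | exact: expectation_cst]. Qed.

Lemma hasE_lin {f g r1 r2} a b : hasE f r1 -> hasE g r2 ->
  hasE (fun w => a * f w + b * g w)%R (a * r1 + b * r2)%R.
Proof.
move=> [f1 Ef] [g1 Eg].
have af : (a \o* f) \in Lfun P 1 by apply: Lfun_scale.
have bg : (b \o* g) \in Lfun P 1 by apply: Lfun_scale.
have -> : (fun w => a * f w + b * g w)%R = ((a \o* f) \+ (b \o* g))%R.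
  by apply: funext => w; rewrite /= /GRing.mulr_fun (mulrC a) (mulrC b).
split; first exact: rpredD.
by rewrite expectationD // !expectationZl // Ef Eg.
Qed.

Lemma hasE_ext {f g r} : (forall w, f w = g w) -> hasE f r -> hasE g r.
Proof. by move=> fg; have -> : f = g by apply/funext. Qed.

Lemma hasE_uniq {f r1 r2} : hasE f r1 -> hasE f r2 -> r1 = r2.
Proof. by move=> [_ E1] [_ E2]; move: E1; rewrite E2 => -[]. Qed.

Lemma hasE_ge0 (f : T -> R) r : measurable_fun setT f -> (forall w, 0 <= f w)%R ->
  \int[P]_w (f w)%:E = r%:E -> hasE f r.
Proof.
move=> mf f0 If; split; last by rewrite unlock.
apply/Lfun1_integrable/integrableP; split; first exact/measurable_EFinP.
under eq_integral do rewrite /= ger0_norm //.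
by rewrite If ltry.
Qed.

Lemma hasE_fin f : f \in Lfun P 1 -> hasE f (fine 'E_P[f]).
Proof. by move=> f1; split => //; rewrite fineK // expectation_fin_num. Qed.

Lemma hasE_measurable {f r} : hasE f r -> measurable_fun setT f.
Proof.
move=> [/Lfun1_integrable/measurable_int f1 _]; exact/measurable_EFinP.
Qed.

Lemma hasE_int {f r} : hasE f r -> \int[P]_w (f w)%:E = r%:E.
Proof. by move=> [_ <-]; rewrite unlock. Qed.

Lemma part_hasE (Z : {RV P >-> R}) {u k : R -> R} :
  measurable_fun setT u -> (forall t, `|u t| <= `|k t|)%R ->
  (k \o Z) \in Lfun P 1 -> hasE (u \o Z) (fine 'E_P[u \o Z]).
Proof.
move=> mu uk /Lfun1_integrable kZ; apply: hasE_fin; apply/Lfun1_integrable.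
apply: le_integrable kZ.
  by [].
  by apply/measurable_EFinP; apply: measurableT_comp => //.
by move=> w _ /=; rewrite lee_fin.
Qed.

Lemma indepM (X Y : {RV P >-> R}) (g h : R -> R) r1 r2 :
  measurable_fun setT g -> measurable_fun setT h ->
  (forall A B, measurable A -> measurable B ->
     P (X @^-1` A `&` Y @^-1` B) = P (X @^-1` A) * P (Y @^-1` B)) ->
  hasE (g \o X) r1 -> hasE (h \o Y) r2 ->
  hasE (fun w => g (X w) * h (Y w))%R (r1 * r2)%R.
Proof.
move=> mg mh ind hg hh.
have prod (u v : R -> R) ru rv : measurable_fun setT u -> measurable_fun setT v ->
    (forall t, 0 <= u t)%R -> (forall t, 0 <= v t)%R ->
    hasE (u \o X) ru -> hasE (v \o Y) rv ->
    hasE (fun w => u (X w) * v (Y w))%R (ru * rv)%R.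
  move=> mu mv u0 v0 hu hv; apply: hasE_ge0.
  - apply: measurable_funM; apply: measurableT_comp => //.
  - by move=> w; rewrite mulr_ge0.
  - by rewrite indep_ge0 // (hasE_int hu) (hasE_int hv).
pose pp (k : R -> R) := fun t => ((`|k t| + k t) / 2)%R.
pose nn (k : R -> R) := fun t => ((`|k t| - k t) / 2)%R.
have mpp k : measurable_fun setT k -> measurable_fun setT (pp k).
  move=> mk; apply: measurable_funM => //.
  apply: measurable_funD => //; exact: measurableT_comp.
have mnn k : measurable_fun setT k -> measurable_fun setT (nn k).
  move=> mk; apply: measurable_funM => //.
  apply: measurable_funB => //; exact: measurableT_comp.
have kn (k : R -> R) (t : R) : (k t <= `|k t| /\ - k t <= `|k t|)%R.
  by split; [apply: real_ler_norm; exact: num_real | rewrite -normrN; apply: real_ler_norm; exact: num_real].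
have pp0 k t : (0 <= pp k t)%R by have [] := kn k t; rewrite /pp => *; lra.
have nn0 k t : (0 <= nn k t)%R by have [] := kn k t; rewrite /nn => *; lra.
have ppk k t : (`|pp k t| <= `|k t|)%R.
  by rewrite ger0_norm // /pp; have [] := kn k t => *; lra.
have nnk k t : (`|nn k t| <= `|k t|)%R.
  by rewrite ger0_norm // /nn; have [] := kn k t => *; lra.
have kE (k : R -> R) (t : R) : k t = (pp k t - nn k t)%R.
  by rewrite /pp /nn; field.
have [L1g _] := hg; have [L1h _] := hh.
have hgp := part_hasE X (mpp g mg) (ppk g) L1g.
have hgn := part_hasE X (mnn g mg) (nnk g) L1g.
have hhp := part_hasE Y (mpp h mh) (ppk h) L1h.
have hhn := part_hasE Y (mnn h mh) (nnk h) L1h.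
set a1 := fine _ in hgp; set a2 := fine _ in hgn.
set b1 := fine _ in hhp; set b2 := fine _ in hhn.
have r1E : r1 = (1 * a1 + (-1) * a2)%R.
  apply: (hasE_uniq hg); apply: hasE_ext (hasE_lin 1 (-1) hgp hgn) => w /=.
  by rewrite (kE g (X w)); ring.
have r2E : r2 = (1 * b1 + (-1) * b2)%R.
  apply: (hasE_uniq hh); apply: hasE_ext (hasE_lin 1 (-1) hhp hhn) => w /=.
  by rewrite (kE h (Y w)); ring.
have H11 := prod _ _ _ _ (mpp g mg) (mpp h mh) (pp0 g) (pp0 h) hgp hhp.
have H12 := prod _ _ _ _ (mpp g mg) (mnn h mh) (pp0 g) (nn0 h) hgp hhn.
have H21 := prod _ _ _ _ (mnn g mg) (mpp h mh) (nn0 g) (pp0 h) hgn hhp.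
have H22 := prod _ _ _ _ (mnn g mg) (mnn h mh) (nn0 g) (nn0 h) hgn hhn.
have := hasE_lin 1 1 (hasE_lin 1 (-1) H11 H12) (hasE_lin (-1) 1 H21 H22).
have -> : (r1 * r2 = 1 * (1 * (a1 * b1) + -1 * (a1 * b2)) +
                     1 * (-1 * (a2 * b1) + 1 * (a2 * b2)))%R.
  by rewrite r1E r2E; ring.
apply: hasE_ext => w /=.
by rewrite (kE g (X w)) (kE h (Y w)); ring.
Qed.

Lemma pow_bound (u : R) (k : nat) : (k <= 4)%N ->
  (`|u ^+ k| <= `|1 * u ^+ 4 + 1 * 1|)%R.
Proof.
move=> k4.
have u4 : (u ^+ 4 = `|u| ^+ 4)%R.
  by rewrite -normrX ger0_norm // exprn_even_ge0.
have e0 := exprn_ge0 4 (normr_ge0 u).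
rewrite normrX u4 !mul1r [X in (_ <= X)%R]ger0_norm; last by lra.
have v0 : (0 <= `|u|)%R by [].
case: (lerP `|u| 1) => v1.
  have := exprn_ile1 k v0 v1; have := exprn_ge0 4 v0; lra.
have : (`|u| ^+ k <= `|u| ^+ 4)%R by rewrite ler_eXn2l.
lra.
Qed.

Lemma moments {Z : {RV P >-> R}} {c : R} {mu : nat -> R} :
  (forall k, (k <= 4)%N -> 'E_P[(fun w => (Z w - c) ^+ k)%R] = (mu k)%:E) ->
  forall k, (k <= 4)%N -> hasE (fun w => (Z w - c) ^+ k)%R (mu k).
Proof.
move=> HZ.
have mZk k : measurable_fun setT (fun w => (Z w - c) ^+ k)%R.
  apply: measurable_funX; apply: measurable_funB => //.
have H4 : hasE (fun w => (Z w - c) ^+ 4)%R (mu 4%N).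
  apply: hasE_ge0 => //.
    by move=> w; exact: exprn_even_ge0.
  by rewrite -HZ // unlock.
move=> k k4; split; last exact: HZ.
have [L _] := hasE_lin 1 1 H4 (hasE_cst 1).
move/Lfun1_integrable in L.
apply/Lfun1_integrable; apply: le_integrable L.
- by [].
- exact/measurable_EFinP.
- by move=> w _ /=; rewrite lee_fin; exact: pow_bound.
Qed.

Lemma moment1 (Z : {RV P >-> R}) (c : R) (mu : nat -> R) :
  (forall k, (k <= 4)%N -> 'E_P[(fun w => (Z w - c) ^+ k)%R] = (mu k)%:E) ->
  'E_P[Z] = c%:E -> mu 1%N = 0%R.
Proof.
move=> HZ EZ.
have H := hasE_lin 1 1 (moments HZ 1%N isT) (hasE_cst c).
have H' : hasE Z (1 * mu 1%N + 1 * c)%R.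
  by apply: hasE_ext H => w /=; rewrite expr1; ring.
have := hasE_uniq H' (conj (proj1 H') EZ) => /=.
lra.
Qed.
Lemma hasE_conv {f g r1 r2} : hasE f r1 -> (forall w, f w = g w) -> r1 = r2 -> hasE g r2.
Proof. by move=> H fg <-; exact: hasE_ext fg H. Qed.

End indep.
Arguments hasE {d T R} P f r.
Arguments hasE_cst {d T R} P r.
Arguments hasE_lin {d T R P f g r1 r2} a b.
Arguments hasE_ext {d T R P f g r}.
Arguments hasE_conv {d T R P f g r1 r2}.
Arguments hasE_uniq {d T R P f r1 r2}.
Arguments hasE_measurable {d T R P f r}.
Arguments moments {d T R P Z c mu}.
Arguments moment1 {d T R P Z c mu}.
Arguments indepM {d T R P X Y g h r1 r2}.

Theorem lemmaE2 (d : measure_display) (T : measurableType d) (R : realType)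
  (P : probability T R) (n : nat)
  (x y : 'rV[R]_n) (f : 'rV[R]_n -> 'rV[R]_n)
  (a b c : 'I_n -> {RV P >-> R})
  (mu : 'I_n -> nat -> R) (alpha : R) :
  mutually_independent P (entries3 (fun i => a i : T -> R)
                                   (fun i => b i : T -> R)
                                   (fun i => c i : T -> R)) ->
  (forall i, [/\ (a i : T -> R) \in Lfun P 4%:E,
                 (b i : T -> R) \in Lfun P 4%:E &
                 (c i : T -> R) \in Lfun P 4%:E]) ->
  (forall i, [/\ 'E_P[a i] = (x ord0 i)%:E,
                 'E_P[b i] = (x ord0 i)%:E &
                 'E_P[c i] = (x ord0 i)%:E]%E) ->
  (forall i k, (k <= 4)%N ->
     [/\ central_moment P (a i) (x ord0 i) k = (mu i k)%:E,
         central_moment P (b i) (x ord0 i) k = (mu i k)%:E &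
         central_moment P (c i) (x ord0 i) k = (mu i k)%:E]) ->
  let gamma := \big[Num.max/0]_(i < n) `|x ord0 i - f y ord0 i| in
  (forall i, Num.max (mu i 4%N) (Num.max (mu i 3%N * gamma) (gamma ^+ 4))
               <= alpha) ->
  forall i : 'I_n,
    ('V_P[uSE (a i) (b i) (c i) (f y ord0 i)] <= (14 * alpha)%:E)%E.
Proof.
move=> Hind _ Hmean Hmom gamma Halpha i.
set xi := x ord0 i.
set fyi := f y ord0 i.
have HmA k : (k <= 4)%N -> 'E_P[(fun w => (a i w - xi) ^+ k)%R]%E = (mu i k)%:E.
  by move=> k4; have [] := Hmom i k k4.
have HmB k : (k <= 4)%N -> 'E_P[(fun w => (b i w - xi) ^+ k)%R]%E = (mu i k)%:E.
  by move=> k4; have [] := Hmom i k k4.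
have HmC k : (k <= 4)%N -> 'E_P[(fun w => (c i w - xi) ^+ k)%R]%E = (mu i k)%:E.
  by move=> k4; have [] := Hmom i k k4.
have [Ea Eb Ec] := Hmean i.
have mu1 : mu i 1%N = 0 := moment1 HmB Eb.
have HA := moments HmA; have HB := moments HmB; have HC := moments HmC.
have indBC : forall A B, measurable A -> measurable B ->
    P (b i @^-1` A `&` c i @^-1` B) = (P (b i @^-1` A) * P (c i @^-1` B))%E.
  move=> A B mA mB.
  pose j1 : 'I_3 * 'I_n := (Ordinal (isT : (1 < 3)%N), i).
  pose j2 : 'I_3 * 'I_n := (Ordinal (isT : (2 < 3)%N), i).
  pose Bf := fun j : 'I_3 * 'I_n => if j == j1 then A else B.
  have mBf : forall j, measurable (Bf j) by move=> j; rewrite /Bf; case: ifP.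
  have := Hind [set j1; j2]%SET Bf mBf.
  have j12 : j1 != j2 by [].
  rewrite big_setU1 ?inE //= big_set1 /Bf eqxx (negbTE (j12 : j2 != j1)) /= => <-.
  congr (P _); apply/seteqP; split => w /=.
    by move=> [Hb Hc] j /= /set2P [->|->] //=; rewrite eqxx.
  move=> H; split.
    by have := H j1; rewrite eqxx /=; apply; rewrite !inE eqxx.
  have := H j2 => /=; apply.
  by rewrite !inE eqxx orbT.
have mg k : measurable_fun setT (fun t : R => (t - xi) ^+ k).
  by apply: measurable_funX; apply: measurable_funB.
have P11 := indepM (mg 1%N) (mg 1%N) indBC (HB 1%N isT) (HC 1%N isT).
have P31 := indepM (mg 3%N) (mg 1%N) indBC (HB 3%N isT) (HC 1%N isT).
have P13 := indepM (mg 1%N) (mg 3%N) indBC (HB 1%N isT) (HC 3%N isT).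
have P22 := indepM (mg 2%N) (mg 2%N) indBC (HB 2%N isT) (HC 2%N isT).
pose del := (xi - fyi).
pose m := mu i 4%N. pose s := mu i 2%N.
have HW : hasE P (uSE (a i) (b i) (c i) fyi) (del ^+ 2).
  have LA := hasE_lin 1 (2 * del) (HA 2%N isT) (HA 1%N isT).
  have LA' := hasE_lin 1 (del ^+ 2) LA (hasE_cst P 1).
  have LB := hasE_lin (- 2^-1) 1 (HB 2%N isT) P11.
  have LB' := hasE_lin 1 (- 2^-1) LB (HC 2%N isT).
  apply: (hasE_conv (hasE_lin 1 1 LA' LB')).
    by move=> w; rewrite /uSE /del /=; field.
  by rewrite mu1; field.
have sm : s ^+ 2 <= m.
  have HZ := hasE_lin 1 (s ^+ 2) (hasE_lin 1 (- 2 * s) (HA 4%N isT) (HA 2%N isT)) (hasE_cst P 1).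
  have := expectation_ge0 P (X := fun w => ((a i w - xi) ^+ 2 - s) ^+ 2) (fun w => sqr_ge0 _).
  have <- : (fun w => 1 * (1 * (a i w - xi) ^+ 4 + - 2 * s * (a i w - xi) ^+ 2) + s ^+ 2 * cst 1 w)
           = (fun w => ((a i w - xi) ^+ 2 - s) ^+ 2).
    by apply: funext => w /=; ring.
  rewrite (proj2 HZ) lee_fin /m /s; lra.
pose G := fun w => 6 * ((a i w - xi) ^+ 2 - s) ^+ 2 + 12 * del ^+ 2 * (a i w - xi) ^+ 2
   + 2 * (((b i w - xi) - (c i w - xi)) ^+ 2 / 2 - s) ^+ 2.
have HG : hasE P G (7 * m - 5 * s ^+ 2 + 12 * del ^+ 2 * s).
  have T1 := hasE_lin 6 (12 * del ^+ 2 - 12 * s) (HA 4%N isT) (HA 2%N isT).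
  have T2 := hasE_lin 1 (8 * s ^+ 2) T1 (hasE_cst P 1).
  have T3 := hasE_lin 1 (2^-1) T2 (HB 4%N isT).
  have T4 := hasE_lin 1 (-2) T3 P31.
  have T5 := hasE_lin 1 3 T4 P22.
  have T6 := hasE_lin 1 (-2) T5 P13.
  have T7 := hasE_lin 1 (2^-1) T6 (HC 4%N isT).
  have T8 := hasE_lin 1 (-2 * s) T7 (HB 2%N isT).
  have T9 := hasE_lin 1 (4 * s) T8 P11.
  have T10 := hasE_lin 1 (-2 * s) T9 (HC 2%N isT).
  apply: (hasE_conv T10).
    by move=> w; rewrite /G /=; field.
  by rewrite mu1 /m /s; field.
have dg : `|del| <= gamma.
  by rewrite /gamma (bigD1 i) //= le_max lexx.
have g0 : 0 <= gamma by apply: le_trans dg.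
have d4 : del ^+ 4 <= alpha.
  have := Halpha i; rewrite !ge_max => /and3P[_ _ H].
  apply: le_trans H.
  rewrite -(ger0_norm (exprn_even_ge0 del (isT : ~~ odd 4))) normrX.
  by apply: lerXn2r; rewrite ?nnegrE.
have ma : m <= alpha.
  by have := Halpha i; rewrite !ge_max => /and3P[H _ _].
have GW w : (uSE (a i) (b i) (c i) fyi w - del ^+ 2) ^+ 2 <= G w.
  have -> : G w = (uSE (a i) (b i) (c i) fyi w - del ^+ 2) ^+ 2
     + (((a i w - xi) ^+ 2 - s + 2 * del * (a i w - xi))
        + (((b i w - xi) - (c i w - xi)) ^+ 2 / 2 - s)) ^+ 2
     + 4 * (((a i w - xi) ^+ 2 - s) - del * (a i w - xi)) ^+ 2.
    by rewrite /G /uSE /del; field.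
  have := sqr_ge0 (((a i w - xi) ^+ 2 - s + 2 * del * (a i w - xi))
        + (((b i w - xi) - (c i w - xi)) ^+ 2 / 2 - s)).
  have := sqr_ge0 (((a i w - xi) ^+ 2 - s) - del * (a i w - xi)).
  lra.
rewrite /variance covariance.unlock (proj2 HW) /=.
apply: (@le_trans _ _ ('E_P[G])%E).
  apply: expectation_le.
  - apply: measurable_funM; apply: measurable_funB => //; exact: hasE_measurable HW.
  - exact: hasE_measurable HG.
  - by move=> w /=; rewrite -expr2; exact: sqr_ge0.
  - by move=> w; apply: le_trans (GW w); exact: sqr_ge0.
  - by apply: aeW => w /=; rewrite -expr2; exact: GW.
rewrite (proj2 HG) lee_fin.
have := sqr_ge0 (del ^+ 2 - s).
nra.
Qed.
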